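(* Let $A$ be a C$^*$-algebra with cancellation. (1) Let $p$ be a projection in $A$ and let $\{g_n\}_{n=1}^N$ be an increasing sequence in $K_0(A)^+$ with $g_N=[p]_0$. Then there exists an increasing sequence $\{p_n\}_{n=1}^N$ of projections in $A$ such that $[p_n]_0=g_n$ for $1\leq n\leq N$ and $p_N=p$. (2) Let $\{p_n\}_{n=1}^N$ be an increasing sequence of projections in $A$ and $\{g_m\}_{m=1}^M$ an increasing sequence in $K_0(A)^+$ such that there is an increasing sequence $\{m_n\}_{n=1}^N$ of indices with $g_{m_n}=[p_n]_0$ for all $1\leq n\leq N$ and $m_N=M$. Then there exists an increasing sequence $\{q_m\}_{m=1}^M$ of projections in $A$ such that $[q_m]_0=g_m$ for all $1\leq m\leq M$ and $p_n=q_{m_n}$ for all $1\leq n\leq N$.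
   Context: For a C$^*$-algebra $A$, $K_0(A)$ is the usual $K_0$-group with positive cone $K_0(A)^+=\{[p]_0 : p \text{ a projection in } M_n(A),\ n\geq1\}$, and $g\leq h$ means $h-g\in K_0(A)^+$. For projections, $p\leq q$ means $pq=qp=p$; increasing sequences are taken with respect to these orders. $A$ has cancellation if for all projections $p,q$ in $\bigcup_{n\geq1}M_n(A)$, $[p]_0=[q]_0$ if and only if $p$ and $q$ are Murray--von Neumann equivalent. *)

(* Defs.v *)
From HB Require Import structures.
From mathcomp Require Import all_boot all_order all_algebra.
From mathcomp Require Import reals complex.
Set Implicit Arguments. Unset Strict Implicit. Unset Printing Implicit Defensive.
Import Order.TTheory GRing.Theory Num.Theory.
Local Open Scope ring_scope.
Local Open Scope complex_scope.

Record CstarAlg (R : realType) : Type := {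
  ca_car :> lmodType R[i];
  ca_mul : ca_car -> ca_car -> ca_car;
  ca_star : ca_car -> ca_car;
  ca_norm : ca_car -> R;
  ca_mulA : forall x y z, ca_mul x (ca_mul y z) = ca_mul (ca_mul x y) z;
  ca_mulDl : forall x y z, ca_mul (x + y) z = ca_mul x z + ca_mul y z;
  ca_mulDr : forall x y z, ca_mul x (y + z) = ca_mul x y + ca_mul x z;
  ca_mulZl : forall (c : R[i]) x y, ca_mul (c *: x) y = c *: ca_mul x y;
  ca_mulZr : forall (c : R[i]) x y, ca_mul x (c *: y) = c *: ca_mul x y;
  ca_starK : forall x, ca_star (ca_star x) = x;
  ca_starD : forall x y, ca_star (x + y) = ca_star x + ca_star y;
  ca_starZ : forall (c : R[i]) x, ca_star (c *: x) = c^* *: ca_star x;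
  ca_starM : forall x y, ca_star (ca_mul x y) = ca_mul (ca_star y) (ca_star x);
  ca_norm_eq0 : forall x, ca_norm x = 0 -> x = 0;
  ca_normD : forall x y, ca_norm (x + y) <= ca_norm x + ca_norm y;
  ca_normZ : forall (c : R[i]) x, (ca_norm (c *: x))%:C = `|c| * (ca_norm x)%:C;
  ca_normM : forall x y, ca_norm (ca_mul x y) <= ca_norm x * ca_norm y;
  ca_Cstar : forall x, ca_norm (ca_mul (ca_star x) x) = ca_norm x ^+ 2;
  ca_complete : forall u : nat -> ca_car,
    (forall e : R, 0 < e -> exists N, forall m n, (N <= m)%N -> (N <= n)%N ->
        ca_norm (u m - u n) < e) ->
    exists l, forall e : R, 0 < e -> exists N, forall n, (N <= n)%N ->
        ca_norm (u n - l) < e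
}.

Definition ca_sort (R : realType) (A : CstarAlg R) : Type :=
  GRing.Lmodule.sort (ca_car A).
Coercion ca_sort : CstarAlg >-> Sortclass.

Section Defs.
Variables (R : realType) (A : CstarAlg R).
Local Notation C := R[i].
Local Notation mulA := (@ca_mul R A).
Local Notation starA := (@ca_star R A).

Definition is_proj (p : A) : Prop := mulA p p = p /\ starA p = p.
Definition proj_le (p q : A) : Prop := mulA p q = p /\ mulA q p = p.

(* The unitization A~ = A (+) C, as a *-algebra (only the algebraic      *)
(* structure is needed to define Murray--von Neumann equivalence).      *)
Definition uT : Type := (A * C)%type.
Definition uzero : uT := (0, 0).
Definition uadd (x y : uT) : uT := (x.1 + y.1, x.2 + y.2).
Definition umul (x y : uT) : uT :=
  (mulA x.1 y.1 + x.2 *: y.1 + y.2 *: x.1, x.2 * y.2).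
Definition ustar (x : uT) : uT := (starA x.1, x.2^*).
Definition uone : uT := (0, 1).
Definition inA (x : uT) : Prop := x.2 = 0.
Definition emb (a : A) : uT := (a, 0).

Definition umat (m n : nat) : Type := 'I_m -> 'I_n -> uT.
Definition umatmul (m n k : nat) (x : umat m n) (y : umat n k) : umat m k :=
  fun i j => \big[uadd/uzero]_(l < n) umul (x i l) (y l j).
Definition uadj (m n : nat) (x : umat m n) : umat n m :=
  fun i j => ustar (x j i).
Definition umat_inA (m n : nat) (x : umat m n) : Prop :=
  forall i j, inA (x i j).
Definition uid (n : nat) : umat n n :=
  fun i j => if i == j then uone else uzero.
Definition udiag (m n : nat) (x : umat m m) (y : umat n n) : umat (m + n) (m + n) :=
  fun i j => match split i, split j with
             | inl i', inl j' => x i' j'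
             | inr i', inr j' => y i' j'
             | _, _ => uzero
             end.
Definition umat_proj (n : nat) (p : umat n n) : Prop :=
  umatmul p p = p /\ uadj p = p.

Definition mvn_u (m n : nat) (p : umat m m) (q : umat n n) : Prop :=
  exists v : umat n m, umatmul (uadj v) v = p /\ umatmul v (uadj v) = q.
Definition mvn_A (m n : nat) (p : umat m m) (q : umat n n) : Prop :=
  exists v : umat n m, umat_inA v /\
    umatmul (uadj v) v = p /\ umatmul v (uadj v) = q.

(* Projections in M_n(A), n >= 1: a representative of an element of K_0(A)^+ *)
Record projA : Type := ProjA {
  pdim : nat;
  pmat : umat pdim pdim;
  pdim_gt0 : (0 < pdim)%N;
  pmat_inA : umat_inA pmat;
  pmat_proj : umat_proj pmat
}.
Arguments pmat : clear implicits.

(* [p]_0 = [q]_0 in K_0(A) (a subgroup of K_0(A~)), for p in M_m(A),   *)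
(* q in M_n(A): standard picture, p (+) 1_k ~ q (+) 1_k in P_oo(A~).    *)
Definition K0eq_raw (m n : nat) (p : umat m m) (q : umat n n) : Prop :=
  exists k : nat, mvn_u (udiag p (@uid k)) (udiag q (@uid k)).
Definition K0eq (p q : projA) : Prop := K0eq_raw (pmat p) (pmat q).

(* g <= h in K_0(A), for g, h in K_0(A)^+: h - g in K_0(A)^+, i.e.      *)
(* h = g + [r]_0 = [g (+) r]_0 for some projection r over A.            *)
Definition K0le (g h : projA) : Prop :=
  exists r : projA, K0eq_raw (udiag (pmat g) (pmat r)) (pmat h).

Definition mat1 (a : A) : umat 1 1 := fun _ _ => emb a.
Definition K0eqA (g : projA) (p : A) : Prop := K0eq_raw (pmat g) (mat1 p).

Definition has_cancellation : Prop :=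
  forall p q : projA, K0eq p q <-> mvn_A (pmat p) (pmat q).

End Defs.

(* Main.v *)
Require Import Defs.
From HB Require Import structures.
From mathcomp Require Import all_boot all_order all_algebra.
From mathcomp Require Import reals complex.
From Stdlib Require Import FunctionalExtensionality.
Set Implicit Arguments. Unset Strict Implicit. Unset Printing Implicit Defensive.
Import Order.TTheory GRing.Theory Num.Theory.
Local Open Scope ring_scope.

Section S.
Variables (R : realType) (A : CstarAlg R).
Local Notation C := R[i].
Local Notation mA := (@ca_mul R A).
Local Notation sA := (@ca_star R A).
Local Notation U := (uT A).

Lemma mA0r (x : A) : mA 0 x = 0.
Proof. by apply: (addrI (mA 0 x)); rewrite -ca_mulDl !addr0. Qed.
Lemma mAr0 (x : A) : mA x 0 = 0.
Proof. by apply: (addrI (mA x 0)); rewrite -ca_mulDr !addr0. Qed.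

Lemma umulA : associative (@umul R A).
Proof.
move=> [a al] [b be] [c ga]; rewrite /umul /=; congr (_, _); last by rewrite mulrA.
rewrite !ca_mulDr !ca_mulZr !ca_mulDl !ca_mulZl !ca_mulA !scalerDr !scalerA.
idtac.
rewrite [ga * al]mulrC [ga * be]mulrC -!addrA.
set X1 := mA (mA a b) c; set X2 := be *: mA a c; set X3 := ga *: mA a b.
set X4 := al *: mA b c; set X5 := (al * be) *: c; set X6 := (al * ga) *: b.
congr (_ + _).
rewrite (addrCA X3 X4) (addrCA X2 X4); congr (_ + _).
by rewrite (addrCA X3 X5).
Qed.

Lemma umul1 : left_id (uone A) (@umul R A).
Proof. by move=> [b be]; rewrite /umul /= mA0r scale1r scaler0 add0r addr0 mul1r. Qed.
Lemma umulr1 : right_id (uone A) (@umul R A).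
Proof. by move=> [b be]; rewrite /umul /= mAr0 scale1r scaler0 !add0r mulr1. Qed.
Lemma pairD (a b : A) (al be : C) : ((a, al) : U) + (b, be) = (a + b, al + be).
Proof. by []. Qed.
Lemma umulDl : left_distributive (@umul R A) +%R.
Proof.
move=> [a al] [b be] [c ga]; rewrite !pairD /umul /=; congr (_, _); last by rewrite mulrDl.
rewrite ca_mulDl scalerDl scalerDr -!addrA; congr (_ + _).
rewrite (addrCA (mA b c)); congr (_ + _).
by rewrite (addrCA (be *: c) (ga *: a)) (addrCA (mA b c) (ga *: a)).
Qed.
Lemma umulDr : right_distributive (@umul R A) +%R.
Proof.
move=> [a al] [b be] [c ga]; rewrite !pairD /umul /=; congr (_, _); last by rewrite mulrDr.
rewrite ca_mulDr scalerDl scalerDr -!addrA; congr (_ + _).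
rewrite (addrCA (mA a c)); congr (_ + _).
by rewrite (addrCA (al *: c) (be *: a)) (addrCA (mA a c) (be *: a)).
Qed.
HB.instance Definition _ := GRing.Zmodule.on U.
HB.instance Definition _ := GRing.Zmodule_isPzRing.Build U umulA umul1 umulr1 umulDl umulDr.

Lemma sAD (x y : A) : sA (x + y) = sA x + sA y. Proof. exact: ca_starD. Qed.
Lemma sA0 : sA 0 = 0 :> A.
Proof. by apply: (addrI (sA 0)); rewrite -sAD !addr0. Qed.
Lemma sAN (x : A) : sA (- x) = - sA x.
Proof. by apply: (addrI (sA x)); rewrite -sAD !subrr sA0. Qed.
Lemma sAK (x : A) : sA (sA x) = x. Proof. exact: ca_starK. Qed.
Lemma sAM (x y : A) : sA (mA x y) = mA (sA y) (sA x). Proof. exact: ca_starM. Qed.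

Definition us (x : U) : U := ustar x.
Lemma usD (x y : U) : us (x + y) = us x + us y.
Proof. by case: x y => [a al] [b be]; rewrite /us /ustar /= sAD rmorphD. Qed.
Lemma us0 : us 0 = 0.
Proof. by rewrite /us /ustar; congr (_, _); [exact: sA0 | exact: conjc0]. Qed.
Lemma usN (x : U) : us (- x) = - us x.
Proof. by case: x => [a al]; rewrite /us /ustar /= sAN rmorphN. Qed.
Lemma usK (x : U) : us (us x) = x.
Proof. by case: x => [a al]; rewrite /us /ustar /= sAK conjcK. Qed.
Lemma us1 : us 1 = 1.
Proof. by rewrite /us /ustar; congr (_, _); [exact: sA0 | exact: conjc1]. Qed.
Lemma usM (x y : U) : us (x * y) = us y * us x.
Proof.
case: x y => [a al] [b be]; rewrite /us /ustar /= /umul /=.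
rewrite !sAD !ca_starZ sAM rmorphM; congr (_, _); last by rewrite mulrC.
by rewrite -addrA (addrC (_ *: sA b)) addrA.
Qed.
Lemma us_sum I (r : seq I) (P : pred I) (F : I -> U) :
  us (\sum_(i <- r | P i) F i) = \sum_(i <- r | P i) us (F i).
Proof. exact: (big_morph us usD us0). Qed.

Lemma split_lshift m n (k : 'I_m) : split (lshift n k) = inl k.
Proof. exact: (unsplitK (inl _ k)). Qed.
Lemma split_rshift m n (k : 'I_n) : split (rshift m k) = inr k.
Proof. exact: (unsplitK (inr _ k)). Qed.
Definition adjM m n (M : 'M[U]_(m, n)) : 'M[U]_(n, m) := \matrix_(i, j) us (M j i).
Lemma adjMK m n (M : 'M[U]_(m, n)) : adjM (adjM M) = M.
Proof. by apply/matrixP=> i j; rewrite !mxE usK. Qed.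
Lemma adjMM m n p (M : 'M[U]_(m, n)) (N : 'M[U]_(n, p)) :
  adjM (M *m N) = adjM N *m adjM M.
Proof.
apply/matrixP=> i j; rewrite !mxE us_sum; apply: eq_bigr=> l _.
by rewrite !mxE usM.
Qed.
Lemma adjM0 m n : adjM (0 : 'M[U]_(m, n)) = 0.
Proof. by apply/matrixP=> i j; rewrite !mxE us0. Qed.
Lemma adjMD m n (M N : 'M[U]_(m, n)) : adjM (M + N) = adjM M + adjM N.
Proof. by apply/matrixP=> i j; rewrite !mxE usD. Qed.
Lemma adjMN m n (M : 'M[U]_(m, n)) : adjM (- M) = - adjM M.
Proof. by apply/matrixP=> i j; rewrite !mxE usN. Qed.
Lemma adjMB m n (M N : 'M[U]_(m, n)) : adjM (M - N) = adjM M - adjM N.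
Proof. by rewrite adjMD adjMN. Qed.
Lemma adjM_scalar n (x : U) : adjM (x%:M : 'M_n) = (us x)%:M.
Proof.
apply/matrixP=> i j; rewrite !mxE.
rewrite eq_sym; case: (i == j) => /=; [by rewrite !mulr1n | rewrite !mulr0n; exact: us0].
Qed.
Lemma adjM1 n : adjM (1%:M : 'M[U]_n) = 1%:M.
Proof. by rewrite adjM_scalar us1. Qed.
Lemma adjM_row m n1 n2 (M1 : 'M[U]_(m, n1)) (M2 : 'M[U]_(m, n2)) :
  adjM (row_mx M1 M2) = col_mx (adjM M1) (adjM M2).
Proof.
apply/matrixP=> i j; rewrite -(splitK i); case: (split i) => k /=.
  by rewrite col_mxEu !mxE split_lshift. by rewrite col_mxEd !mxE split_rshift.
Qed.
Lemma adjM_col m1 m2 n (M1 : 'M[U]_(m1, n)) (M2 : 'M[U]_(m2, n)) :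
  adjM (col_mx M1 M2) = row_mx (adjM M1) (adjM M2).
Proof.
apply/matrixP=> i j; rewrite -(splitK j); case: (split j) => k /=.
  by rewrite row_mxEl !mxE split_lshift. by rewrite row_mxEr !mxE split_rshift.
Qed.
Lemma adjM_block m1 m2 n1 n2 (Aul : 'M[U]_(m1, n1)) (Aur : 'M[U]_(m1, n2))
  (Adl : 'M[U]_(m2, n1)) (Adr : 'M[U]_(m2, n2)) :
  adjM (block_mx Aul Aur Adl Adr) = block_mx (adjM Aul) (adjM Adl) (adjM Aur) (adjM Adr).
Proof. by rewrite /block_mx adjM_col !adjM_row -block_mxEh. Qed.

Definition inAM m n (M : 'M[U]_(m, n)) : Prop := forall i j, (M i j).2 = 0.
Lemma snd_sum I (r : seq I) (P : pred I) (F : I -> U) :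
  (\sum_(i <- r | P i) F i).2 = \sum_(i <- r | P i) (F i).2.
Proof. exact: (big_morph snd (fun x y => erefl) (erefl : (0 : U).2 = 0)). Qed.
Lemma inAM_mull m n p (M : 'M[U]_(m, n)) (N : 'M[U]_(n, p)) : inAM M -> inAM (M *m N).
Proof.
move=> HM i j; rewrite mxE snd_sum big1 // => l _.
by rewrite /= HM mul0r.
Qed.
Lemma inAM_mulr m n p (M : 'M[U]_(m, n)) (N : 'M[U]_(n, p)) : inAM N -> inAM (M *m N).
Proof.
move=> HN i j; rewrite mxE snd_sum big1 // => l _.
by rewrite /= HN mulr0.
Qed.
Lemma inAM_adj m n (M : 'M[U]_(m, n)) : inAM M -> inAM (adjM M).
Proof. by move=> HM i j; rewrite mxE /= HM conjc0. Qed.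
Lemma inAM0 m n : inAM (0 : 'M[U]_(m, n)).
Proof. by move=> i j; rewrite mxE. Qed.
Lemma inAMD m n (M N : 'M[U]_(m, n)) : inAM M -> inAM N -> inAM (M + N).
Proof. by move=> HM HN i j; rewrite mxE /= HM HN addr0. Qed.
Lemma inAMN m n (M : 'M[U]_(m, n)) : inAM M -> inAM (- M).
Proof. by move=> HM i j; rewrite mxE /= HM oppr0. Qed.
Lemma inAMB m n (M N : 'M[U]_(m, n)) : inAM M -> inAM N -> inAM (M - N).
Proof. by move=> HM HN; apply: inAMD => //; apply: inAMN. Qed.
Lemma inAM_row m n1 n2 (M1 : 'M[U]_(m, n1)) (M2 : 'M[U]_(m, n2)) :
  inAM M1 -> inAM M2 -> inAM (row_mx M1 M2).
Proof.
move=> H1 H2 i j; rewrite -(splitK j); case: (split j) => k /=.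
  by rewrite row_mxEl. by rewrite row_mxEr.
Qed.
Lemma inAM_col m1 m2 n (M1 : 'M[U]_(m1, n)) (M2 : 'M[U]_(m2, n)) :
  inAM M1 -> inAM M2 -> inAM (col_mx M1 M2).
Proof.
move=> H1 H2 i j; rewrite -(splitK i); case: (split i) => k /=.
  by rewrite col_mxEu. by rewrite col_mxEd.
Qed.
Lemma inAM_block m1 m2 n1 n2 (Aul : 'M[U]_(m1, n1)) (Aur : 'M[U]_(m1, n2))
  (Adl : 'M[U]_(m2, n1)) (Adr : 'M[U]_(m2, n2)) :
  inAM Aul -> inAM Aur -> inAM Adl -> inAM Adr -> inAM (block_mx Aul Aur Adl Adr).
Proof. by move=> *; apply: inAM_col; apply: inAM_row. Qed.

Definition E (a : A) : 'M[U]_1 := (emb a)%:M.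
Lemma emb_mul (a b : A) : emb a * emb b = emb (mA a b).
Proof. by rewrite /emb; change ((umul (a, 0) (b, 0)) = (mA a b, 0)); rewrite /umul /= !scale0r !addr0 mulr0. Qed.
Lemma E_mul a b : E a *m E b = E (mA a b).
Proof. by rewrite /E -scalar_mxM emb_mul. Qed.
Lemma E_add a b : E (a + b) = E a + E b.
Proof. by apply/matrixP=> i j; rewrite !mxE -mulrnDl /emb pairD addr0. Qed.
Lemma E0 : E 0 = 0.
Proof. by apply/matrixP=> i j; rewrite !mxE; case: (i == j) => /=; rewrite ?mulr1n ?mulr0n. Qed.
Lemma E_opp a : E (- a) = - E a.
Proof. by apply: (addrI (E a)); rewrite -E_add !subrr E0. Qed.
Lemma E_sub a b : E (a - b) = E a - E b.
Proof. by rewrite E_add E_opp. Qed.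
Lemma adjM_E a : adjM (E a) = E (sA a).
Proof. by rewrite /E adjM_scalar; congr (_%:M); rewrite /us /ustar /emb; congr (_, _); exact: conjc0. Qed.
Lemma inAM_E a : inAM (E a).
Proof. by move=> i j; rewrite !mxE; case: (i == j); rewrite /= ?mulr1n ?mulr0n. Qed.
Lemma E_inj : injective E.
Proof. by move=> a b /matrixP /(_ ord0 ord0); rewrite !mxE /= !mulr1n => -[]. Qed.
Lemma inAM_1E (M : 'M[U]_1) : inAM M -> M = E (M ord0 ord0).1.
Proof.
move=> HM; apply/matrixP=> i j; rewrite !ord1 !mxE /= mulr1n /emb.
by case: (M ord0 ord0) (HM ord0 ord0) => x y /= ->.
Qed.

Definition D m n (X : 'M[U]_m) (Y : 'M[U]_n) : 'M[U]_(m + n) := block_mx X 0 0 Y.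
Lemma D_mul m n (X X' : 'M[U]_m) (Y Y' : 'M[U]_n) : D X Y *m D X' Y' = D (X *m X') (Y *m Y').
Proof. by rewrite /D mulmx_block !mulmx0 !mul0mx !addr0 !add0r. Qed.
Lemma adjM_D m n (X : 'M[U]_m) (Y : 'M[U]_n) : adjM (D X Y) = D (adjM X) (adjM Y).
Proof. by rewrite /D adjM_block !adjM0. Qed.
Lemma inAM_D m n (X : 'M[U]_m) (Y : 'M[U]_n) : inAM X -> inAM Y -> inAM (D X Y).
Proof. by move=> *; apply: inAM_block => //; apply: inAM0. Qed.

Definition projM n (P : 'M[U]_n) : Prop := P *m P = P /\ adjM P = P.
Lemma projM_D m n (X : 'M[U]_m) (Y : 'M[U]_n) : projM X -> projM Y -> projM (D X Y).
Proof. by move=> [H1 H2] [H3 H4]; split; rewrite ?D_mul ?adjM_D ?H1 ?H2 ?H3 ?H4. Qed.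
Lemma projM0 n : projM (0 : 'M[U]_n).
Proof. by split; rewrite ?mul0mx ?adjM0. Qed.

Definition mvnM m n (P : 'M[U]_m) (Q : 'M[U]_n) : Prop :=
  exists V : 'M[U]_(n, m), adjM V *m V = P /\ V *m adjM V = Q.
Definition mvnAM m n (P : 'M[U]_m) (Q : 'M[U]_n) : Prop :=
  exists V : 'M[U]_(n, m), inAM V /\ adjM V *m V = P /\ V *m adjM V = Q.

Lemma mvnAM_M m n (P : 'M[U]_m) (Q : 'M[U]_n) : mvnAM P Q -> mvnM P Q.
Proof. by case=> V [_ H]; exists V. Qed.
Lemma mvnAM_refl n (P : 'M[U]_n) : projM P -> inAM P -> mvnAM P P.
Proof. by move=> [H1 H2] HA; exists P; rewrite H2 H1. Qed.
Lemma mvnM_refl n (P : 'M[U]_n) : projM P -> mvnM P P.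
Proof. by move=> [H1 H2]; exists P; rewrite H2 H1. Qed.
Lemma mvnAM_sym m n (P : 'M[U]_m) (Q : 'M[U]_n) : mvnAM P Q -> mvnAM Q P.
Proof. by case=> V [HA [H1 H2]]; exists (adjM V); rewrite adjMK; split => //; apply: inAM_adj. Qed.
Lemma mvnM_sym m n (P : 'M[U]_m) (Q : 'M[U]_n) : mvnM P Q -> mvnM Q P.
Proof. by case=> V [H1 H2]; exists (adjM V); rewrite adjMK. Qed.
Lemma trans_core m n k (P : 'M[U]_m) (Q : 'M[U]_n) (S : 'M[U]_k) V W :
  P *m P = P -> S *m S = S ->
  adjM V *m V = P -> V *m adjM V = Q -> adjM W *m W = Q -> W *m adjM W = S ->
  adjM (W *m V) *m (W *m V) = P /\ (W *m V) *m adjM (W *m V) = S.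
Proof.
move=> PP SS H1 H2 H3 H4; rewrite adjMM; split.
  have -> : adjM V *m adjM W *m (W *m V) = adjM V *m (adjM W *m W) *m V by rewrite !mulmxA.
  rewrite H3 -H2.
  have -> : adjM V *m (V *m adjM V) *m V = (adjM V *m V) *m (adjM V *m V) by rewrite !mulmxA.
  by rewrite H1.
have -> : W *m V *m (adjM V *m adjM W) = W *m (V *m adjM V) *m adjM W by rewrite !mulmxA.
rewrite H2 -H3.
have -> : W *m (adjM W *m W) *m adjM W = (W *m adjM W) *m (W *m adjM W) by rewrite !mulmxA.
by rewrite H4.
Qed.
Lemma mvnAM_trans m n k (P : 'M[U]_m) (Q : 'M[U]_n) (S : 'M[U]_k) :
  projM P -> projM S -> mvnAM P Q -> mvnAM Q S -> mvnAM P S.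
Proof.
move=> [PP _] [SS _] [V [HV [H1 H2]]] [W [HW [H3 H4]]].
exists (W *m V); split; first exact: inAM_mulr.
exact: (trans_core PP SS H1 H2 H3 H4).
Qed.
Lemma mvnM_trans m n k (P : 'M[U]_m) (Q : 'M[U]_n) (S : 'M[U]_k) :
  projM P -> projM S -> mvnM P Q -> mvnM Q S -> mvnM P S.
Proof.
move=> [PP _] [SS _] [V [H1 H2]] [W [H3 H4]].
exists (W *m V); exact: (trans_core PP SS H1 H2 H3 H4).
Qed.
Definition DR m n m' n' (V : 'M[U]_(m', m)) (W : 'M[U]_(n', n)) : 'M[U]_(m' + n', m + n) :=
  block_mx V 0 0 W.
Lemma adjM_DR m n m' n' (V : 'M[U]_(m', m)) (W : 'M[U]_(n', n)) :
  adjM (DR V W) = DR (adjM V) (adjM W).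
Proof. by rewrite /DR adjM_block !adjM0. Qed.
Lemma DR_mul m n m' n' p q (V : 'M[U]_(m', m)) (W : 'M[U]_(n', n)) (V' : 'M[U]_(m, p)) (W' : 'M[U]_(n, q)) :
  DR V W *m DR V' W' = DR (V *m V') (W *m W').
Proof. by rewrite /DR mulmx_block !mulmx0 !mul0mx !addr0 !add0r. Qed.
Lemma mvnAM_D m n m' n' (P : 'M[U]_m) (Q : 'M[U]_n) (P' : 'M[U]_m') (Q' : 'M[U]_n') :
  mvnAM P P' -> mvnAM Q Q' -> mvnAM (D P Q) (D P' Q').
Proof.
move=> [V [HV [H1 H2]]] [W [HW [H3 H4]]]; exists (DR V W); split.
  by apply: inAM_block => //; apply: inAM0.
by rewrite adjM_DR !DR_mul H1 H2 H3 H4.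
Qed.
Lemma mvnM_D m n m' n' (P : 'M[U]_m) (Q : 'M[U]_n) (P' : 'M[U]_m') (Q' : 'M[U]_n') :
  mvnM P P' -> mvnM Q Q' -> mvnM (D P Q) (D P' Q').
Proof.
move=> [V [H1 H2]] [W [H3 H4]]; exists (DR V W).
by rewrite adjM_DR !DR_mul H1 H2 H3 H4.
Qed.
Lemma lassoc m n p (a : 'M[U]_(m, n)) (b : 'M[U]_(n, p)) c :
  a *m b = c -> forall k (X : 'M[U]_(k, m)), X *m a *m b = X *m c.
Proof. by move=> H k X; rewrite -mulmxA H. Qed.
Lemma lassoc2 m n p q (a : 'M[U]_(m, n)) (b : 'M[U]_(n, p)) (d : 'M[U]_(p, q)) c :
  a *m b *m d = c -> forall k (X : 'M[U]_(k, m)), X *m a *m b *m d = X *m c.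
Proof. by move=> H k X; rewrite -H !mulmxA. Qed.
Lemma mvnAM_norm m n (P : 'M[U]_m) (Q : 'M[U]_n) : projM P -> projM Q -> mvnAM P Q ->
  exists V, [/\ inAM V, adjM V *m V = P, V *m adjM V = Q, Q *m V = V & V *m P = V].
Proof.
move=> [PP PA] [QQ QA] [V [HV [H1 H2]]]; exists (Q *m V *m P); split.
- by apply: inAM_mull; apply: inAM_mulr.
- have E1 : adjM V *m Q *m V = P.
    rewrite -H2; have -> : adjM V *m (V *m adjM V) *m V = (adjM V *m V) *m (adjM V *m V) by rewrite !mulmxA.
    by rewrite H1.
  rewrite !adjMM PA QA !mulmxA (lassoc QQ) (lassoc2 E1) (lassoc PP).
  by rewrite PP.
- have E1 : V *m P *m adjM V = Q.
    rewrite -H1; have -> : V *m (adjM V *m V) *m adjM V = (V *m adjM V) *m (V *m adjM V) by rewrite !mulmxA.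
    by rewrite H2.
  rewrite !adjMM PA QA !mulmxA (lassoc PP) (lassoc2 E1) (lassoc QQ).
  by rewrite QQ.
- by rewrite !mulmxA QQ.
- by rewrite -!mulmxA PP.
Qed.
End S.


Section S2.
Variables (R : realType) (A : CstarAlg R).
Local Notation C := R[i].
Local Notation mA := (@ca_mul R A).
Local Notation sA := (@ca_star R A).
Local Notation U := (uT A).
Local Notation I1 := (1%:M : 'M[uT A]_1).

Ltac bsimp := rewrite /D ?(mulmx_block, mul_row_col, mul_col_row, mul_row_block, mul_block_col,
  mul_col_mx, mul_mx_row, mulmx0, mul0mx, addr0, add0r, row_mx0, col_mx0, block_mx0,
  add_block_mx, add_row_mx, add_col_mx, adjM_block, adjM_row, adjM_col, adjM0).

Lemma projM1 n : projM (1%:M : 'M[U]_n).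
Proof. by split; rewrite ?mul1mx ?adjM1. Qed.
Lemma projM_compl n (e : 'M[U]_n) : projM e -> projM (1%:M - e).
Proof.
move=> [ee ea]; split; last by rewrite adjMB adjM1 ea.
by rewrite mulmxBl !mulmxBr !mul1mx mulmx1 ee subrr subr0.
Qed.

Lemma K1 m (X : 'M[U]_m) (e : 'M[U]_1) : projM X -> projM e ->
  mvnM (D X I1) (D (D X e) (I1 - e)).
Proof.
move=> [XX XA] [ee ea].
exists (col_mx (D X e) (row_mx 0 (I1 - e))).
rewrite adjM_col adjM_row adjM_D adjMB adjM1 XA ea adjM0; bsimp.
have c1 : (I1 - e) *m (I1 - e) = I1 - e by case: (projM_compl (conj ee ea)).
have c2 : e *m (I1 - e) = 0 by rewrite mulmxBr mulmx1 ee subrr.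
have c3 : (I1 - e) *m e = 0 by rewrite mulmxBl mul1mx ee subrr.
rewrite XX ee c1 c2 c3 row_mx0 col_mx0 (addrC e) subrK; split=> //.
Qed.

Lemma Ca m n (X : 'M[U]_m) (Y : 'M[U]_n) (e : 'M[U]_1) : projM X -> projM Y -> projM e ->
  mvnM (D X e) (D Y e) -> mvnM (D X I1) (D Y I1).
Proof.
move=> PX PY Pe H.
have P1 := @projM1 1.
have Pf := projM_compl Pe.
apply: (mvnM_trans (projM_D PX P1) (projM_D PY P1) (K1 PX Pe)).
apply: (mvnM_trans (projM_D (projM_D PX Pe) Pf) (projM_D PY P1)).
  exact: (mvnM_D H (mvnM_refl Pf)).
exact: (mvnM_sym (K1 PY Pe)).
Qed.

Lemma split_mvn n (P Q : 'M[U]_n) : projM P -> projM Q -> inAM P -> inAM Q ->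
  P *m Q = Q -> Q *m P = Q -> mvnAM (D (P - Q) Q) P.
Proof.
move=> [PP PA] [QQ QA] iP iQ PQ QP; exists (row_mx (P - Q) Q); split.
  by apply: inAM_row => //; apply: inAMB.
have c1 : (P - Q) *m (P - Q) = P - Q.
  by rewrite mulmxBl !mulmxBr PP PQ QP QQ subrr subr0.
have c2 : (P - Q) *m Q = 0 by rewrite mulmxBl PQ QQ subrr.
have c3 : Q *m (P - Q) = 0 by rewrite mulmxBr QP QQ subrr.
rewrite adjM_row adjMB PA QA; bsimp; rewrite c1 c2 c3 QQ subrK; split=> //.
Qed.

Lemma zero_mvn m n (X : 'M[U]_n) : projM X -> inAM X -> mvnAM (D (0 : 'M[U]_m) X) X.
Proof.
move=> [XX XA] iX; exists (row_mx 0 X); split; first by apply: inAM_row => //; apply: inAM0.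
by rewrite adjM_row XA; bsimp; rewrite XX.
Qed.

Lemma assoc_mvn m1 m2 m3 (X : 'M[U]_m1) (Y : 'M[U]_m2) (Z : 'M[U]_m3) :
  projM X -> projM Y -> projM Z -> inAM X -> inAM Y -> inAM Z ->
  mvnAM (D X (D Y Z)) (D (D X Y) Z).
Proof.
move=> [XX XA] [YY YA] [ZZ ZA] iX iY iZ.
exists (block_mx (col_mx X (0 : 'M_(m2, m1))) (block_mx (0 : 'M_(m1, m2)) (0 : 'M_(m1, m3)) Y (0 : 'M_(m2, m3)))
   (0 : 'M_(m3, m1)) (row_mx (0 : 'M_(m3, m2)) Z)); split.
  by repeat first [apply: inAM_block | apply: inAM_col | apply: inAM_row | apply: inAM0 | assumption].
rewrite !(adjM_block, adjM_col, adjM_row, adjM0) XA YA ZA; bsimp.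
by rewrite XX YY ZZ.
Qed.

Definition leM m (X : 'M[U]_m) n (Y : 'M[U]_n) :=
  exists k (S : 'M[U]_k), [/\ projM S, inAM S & mvnAM (D X S) Y].

Lemma leM_trans m n k (X : 'M[U]_m) (Y : 'M[U]_n) (Z : 'M[U]_k) :
  projM X -> inAM X -> projM Y -> inAM Y -> projM Z ->
  leM X Y -> leM Y Z -> leM X Z.
Proof.
move=> PX iX PY iY PZ [k1 [S [PS iS H1]]] [k2 [T [PT iT H2]]].
exists (k1 + k2), (D S T); split; [exact: projM_D | exact: inAM_D |].
apply: (mvnAM_trans (projM_D PX (projM_D PS PT)) PZ (assoc_mvn PX PS PT iX iS iT)).
apply: (mvnAM_trans (projM_D (projM_D PX PS) PT) PZ _ H2).
exact: (mvnAM_D H1 (mvnAM_refl PT iT)).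
Qed.
Lemma leM_eqr m n k (X : 'M[U]_m) (Y : 'M[U]_n) (Z : 'M[U]_k) :
  projM X -> projM Z -> leM X Y -> mvnAM Y Z -> leM X Z.
Proof.
move=> PX PZ [k1 [S [PS iS H1]]] H2; exists k1, S; split => //.
exact: (mvnAM_trans (projM_D PX PS) PZ H1 H2).
Qed.
Lemma leM_eql m n k (X : 'M[U]_m) (Y : 'M[U]_n) (Z : 'M[U]_k) :
  projM X -> projM Z -> mvnAM X Y -> leM Y Z -> leM X Z.
Proof.
move=> PX PZ H1 [k1 [S [PS iS H2]]]; exists k1, S; split => //.
apply: (mvnAM_trans (projM_D PX PS) PZ _ H2).
exact: (mvnAM_D H1 (mvnAM_refl PS iS)).
Qed.
Lemma leM_0 n (X : 'M[U]_n) : projM X -> inAM X -> leM (0 : 'M[U]_1) X.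
Proof. by move=> PX iX; exists n, X; split => //; apply: zero_mvn. Qed.

Lemma projM_sub n (P Q : 'M[U]_n) : projM P -> projM Q -> P *m Q = Q -> Q *m P = Q ->
  projM (P - Q).
Proof.
move=> [PP PA] [QQ QA] PQ QP; split; last by rewrite adjMB PA QA.
by rewrite mulmxBl !mulmxBr PP PQ QP QQ subrr subr0.
Qed.
Lemma adj_flip m n (M : 'M[U]_(m, n)) (P : 'M[U]_m) (N : 'M[U]_(m, n)) :
  adjM P = P -> P *m M = N -> adjM M *m P = adjM N.
Proof. by move=> PA <-; rewrite adjMM PA. Qed.
End S2.

Section S3.
Variables (R : realType) (A : CstarAlg R).
Local Notation C := R[i].
Local Notation mA := (@ca_mul R A).
Local Notation sA := (@ca_star R A).
Local Notation U := (uT A).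
Local Notation I1 := (1%:M : 'M[uT A]_1).

Ltac bsimp3 := rewrite /D ?(mulmx_block, mul_row_col, mul_col_row, mul_row_block, mul_block_col,
  mul_col_mx, mul_mx_row, mulmx0, mul0mx, addr0, add0r, row_mx0, col_mx0, block_mx0,
  add_block_mx, add_row_mx, add_col_mx, adjM_block, adjM_row, adjM_col, adjM0).

Lemma core
 (canc1 : forall P Q : 'M[U]_1, projM P -> projM Q -> inAM P -> inAM Q ->
     mvnM (D P I1) (D Q I1) -> mvnAM P Q)
 (a b : A) k (H : 'M[U]_k) :
 projM (E a) -> projM (E b) -> E a *m E b = E a -> E b *m E a = E a -> projM H -> inAM H ->
 leM (E a) H -> leM H (E b) ->
 exists c : A, projM (E c) /\ E a *m E c = E a /\ E c *m E a = E a /\ E c *m E b = E c /\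
    E b *m E c = E c /\ mvnAM H (E c).
Proof.
move=> PEa PEb ab ba PH iH [ms [S [PS iS V1]]] [mr [Rr [PR iR V2]]].
have iEa := inAM_E a; have iEb := inAM_E b.
case: (PEa) => aa aA; case: (PEb) => bb bA; case: (PS) => SS SA; case: (PR) => RR RA.
have PG := projM_D (projM_D PEa PS) PR.
have HG : mvnAM (D (D (E a) S) Rr) (E b).
  exact: (mvnAM_trans PG PEb (mvnAM_D V1 (mvnAM_refl PR iR)) V2).
have [u [iu u1 u2 u3 u4]] := mvnAM_norm PG PEb HG.
pose Ja := col_mx (col_mx (E a) (0 : 'M[U]_(ms, 1))) (0 : 'M[U]_(mr, 1)).
pose Jsr := block_mx (col_mx (0 : 'M[U]_(1, ms)) S) (0 : 'M[U]_(1 + ms, mr)) (0 : 'M[U]_(mr, ms)) Rr.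
have GJa : D (D (E a) S) Rr *m Ja = Ja by rewrite /Ja; bsimp3; rewrite aa.
have aJJ : adjM Ja *m Ja = E a by rewrite /Ja; bsimp3; rewrite aA aa.
have GJsr : D (D (E a) S) Rr *m Jsr = Jsr by rewrite /Jsr; bsimp3; rewrite SS RR.
have sJJ : adjM Jsr *m Jsr = D S Rr by rewrite /Jsr; bsimp3; rewrite SA RA SS RR.
have FF : Ja *m adjM Ja + Jsr *m adjM Jsr = D (D (E a) S) Rr.
  by rewrite /Ja /Jsr; bsimp3; rewrite aA SA RA aa SS RR.
pose z := u *m Ja.
have z1 : adjM z *m z = E a.
  by rewrite /z adjMM -mulmxA (mulmxA (adjM u)) u1 GJa aJJ.
pose a' := z *m adjM z.
pose y := u *m Jsr.
have y1 : adjM y *m y = D S Rr.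
  by rewrite /y adjMM -mulmxA (mulmxA (adjM u)) u1 GJsr sJJ.
have ya : a' + y *m adjM y = E b.
  rewrite /a' /z /y !adjMM !mulmxA -(mulmxA u Ja) -(mulmxA u Jsr) -mulmxDl -mulmxDr FF.
  by rewrite u4 u2.
have ia' : inAM a' by apply: inAM_mull; apply: inAM_mull.
have Ja_a : Ja *m E a = Ja by rewrite /Ja; bsimp3; rewrite aa.
have Pa' : projM a'.
  split; last by rewrite /a' adjMM adjMK.
  rewrite /a' -mulmxA (mulmxA (adjM z)) z1 /z adjMM !mulmxA.
  by rewrite -(mulmxA u Ja (E a)) Ja_a.
have ba' : E b *m a' = a' by rewrite /a' /z !mulmxA u3.
have a'b : a' *m E b = a'.
  by rewrite -[LHS]adjMK adjMM bA (proj2 Pa') ba' (proj2 Pa').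
have zz : mvnAM (E a) a' by exists z; split; [exact: (inAM_mull _ iu) | by split].
have Pba := projM_sub PEb PEa ba ab.
have Pba' := projM_sub PEb Pa' ba' a'b.
have s1 := split_mvn PEb PEa iEb iEa ba ab.
have s2 := split_mvn PEb Pa' iEb ia' ba' a'b.
have s3 : mvnAM (D (E b - E a) (E a)) (D (E b - a') (E a)).
  apply: (mvnAM_trans (projM_D Pba PEa) (projM_D Pba' PEa) s1).
  apply: (mvnAM_trans PEb (projM_D Pba' PEa) (mvnAM_sym s2)).
  exact: (mvnAM_D (mvnAM_refl Pba' (inAMB iEb ia')) (mvnAM_sym zz)).
have s4 := Ca Pba Pba' PEa (mvnAM_M s3).
have s5 := @canc1 _ _ Pba Pba' (inAMB iEb iEa) (inAMB iEb ia') s4.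
have s6 : mvnAM (D S Rr) (E b - a').
  exists y; split; first by apply: inAM_mull.
  by split => //; rewrite -ya addrAC subrr add0r.
have s7 := mvnAM_trans (projM_D PS PR) Pba s6 (mvnAM_sym s5).
have [w [iw w1 w2 w3 w4]] := mvnAM_norm (projM_D PS PR) Pba s7.
have Eaw : E a *m w = 0 by rewrite -w3 mulmxA mulmxBr ab aa subrr mul0mx.
have Ebw : E b *m w = w by rewrite -{1}w3 mulmxA mulmxBr bb ba w3.
have wEa : adjM w *m E a = 0 by rewrite -aA -adjMM Eaw adjM0.
pose Ks := col_mx S (0 : 'M[U]_(mr, ms)).
pose t := row_mx (E a) (w *m Ks).
have t1 : adjM t *m t = D (E a) S.
  rewrite /t adjM_row adjMM aA mul_col_row aa mulmxA Eaw mul0mx.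
  rewrite -mulmxA wEa mulmx0 mulmxA -(mulmxA (adjM Ks)) w1 /Ks; bsimp3.
  by rewrite SA SS SS.
have t2 : t *m D (E a) S = t.
  by rewrite /t /Ks; bsimp3; rewrite aa -mulmxA; bsimp3; rewrite SS.
pose Cm := t *m adjM t.
have iCm : inAM Cm.
  by apply: inAM_mull; apply: inAM_row => //; apply: inAM_mull.
have PCm : projM Cm.
  split; last by rewrite /Cm adjMM adjMK.
  by rewrite /Cm -mulmxA (mulmxA (adjM t)) t1 mulmxA t2.
have ECm : E (Cm ord0 ord0).1 = Cm by rewrite -inAM_1E.
have aC : E a *m Cm = E a.
  by rewrite /Cm /t mulmxA mul_mx_row aa mulmxA Eaw mul0mx adjM_row mul_row_col aA aa mul0mx addr0.
have bC : E b *m Cm = Cm.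
  by rewrite /Cm mulmxA /t mul_mx_row ba mulmxA Ebw.
exists (Cm ord0 ord0).1; rewrite ECm; split => //; split => //.
split; first by rewrite -[LHS]adjMK adjMM aA (proj2 PCm) aC aA.
split; first by rewrite -[LHS]adjMK adjMM bA (proj2 PCm) bC (proj2 PCm).
split => //.
apply: (mvnAM_trans PH PCm (mvnAM_sym V1)).
exists t; split; first by apply: inAM_row => //; apply: inAM_mull.
by [].
Qed.
End S3.

Section S4.
Variables (R : realType) (A : CstarAlg R).
Local Notation C := R[i].
Local Notation mA := (@ca_mul R A).
Local Notation sA := (@ca_star R A).
Local Notation U := (uT A).
Local Notation I1 := (1%:M : 'M[uT A]_1).

Definition toM m n (x : umat A m n) : 'M[U]_(m, n) := \matrix_(i, j) x i j.
Definition ofM m n (M : 'M[U]_(m, n)) : umat A m n := fun i j => M i j.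
Lemma toMK m n (M : 'M[U]_(m, n)) : toM (ofM M) = M.
Proof. by apply/matrixP=> i j; rewrite mxE. Qed.
Lemma toM_inj m n (x y : umat A m n) : toM x = toM y -> x = y.
Proof.
move/matrixP=> H; apply: functional_extensionality => i; apply: functional_extensionality => j.
by have := H i j; rewrite !mxE.
Qed.
Lemma toM_mul m n p (x : umat A m n) (y : umat A n p) : toM (umatmul x y) = toM x *m toM y.
Proof.
apply/matrixP=> i j; rewrite !mxE /umatmul; apply: eq_bigr => l _; by rewrite !mxE.
Qed.
Lemma toM_adj m n (x : umat A m n) : toM (uadj x) = adjM (toM x).
Proof. by apply/matrixP=> i j; rewrite !mxE. Qed.
Lemma toM_udiag m n (x : umat A m m) (y : umat A n n) : toM (udiag x y) = D (toM x) (toM y).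
Proof.
apply/matrixP=> i j; rewrite /D mxE /udiag -(splitK i) -(splitK j).
case: (split i) => i'; case: (split j) => j' /=;
  by rewrite ?split_lshift ?split_rshift ?block_mxEul ?block_mxEur ?block_mxEdl ?block_mxEdr !mxE.
Qed.
Lemma toM_uid k : toM (@uid R A k) = 1%:M.
Proof. by apply/matrixP=> i j; rewrite !mxE /uid; case: (i == j). Qed.
Lemma toM_mat1 (a : A) : toM (mat1 a) = E a.
Proof. by apply/matrixP=> i j; rewrite !mxE !ord1 eqxx mulr1n. Qed.
Lemma inA_toM m n (x : umat A m n) : umat_inA x <-> inAM (toM x).
Proof. by split=> H i j; move: (H i j); rewrite ?mxE. Qed.
Lemma proj_toM n (x : umat A n n) : umat_proj x <-> projM (toM x).
Proof.
split=> [[H1 H2] | [H1 H2]].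
  by split; rewrite -?toM_mul -?toM_adj ?H1 ?H2.
by split; apply: toM_inj; rewrite ?toM_mul ?toM_adj.
Qed.
Lemma mvnu_toM m n (p : umat A m m) (q : umat A n n) : mvn_u p q <-> mvnM (toM p) (toM q).
Proof.
split=> [[V [H1 H2]] | [V [H1 H2]]].
  by exists (toM V); rewrite -toM_adj -!toM_mul H1 H2.
exists (ofM V); split; apply: toM_inj; by rewrite toM_mul toM_adj toMK ?H1 ?H2.
Qed.
Lemma mvnA_toM m n (p : umat A m m) (q : umat A n n) : mvn_A p q <-> mvnAM (toM p) (toM q).
Proof.
split=> [[V [HV [H1 H2]]] | [V [HV [H1 H2]]]].
  exists (toM V); rewrite -toM_adj -!toM_mul H1 H2; split => //; exact: (proj1 (inA_toM V) HV).
exists (ofM V); split; first by apply/inA_toM; rewrite toMK.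
split; apply: toM_inj; by rewrite toM_mul toM_adj toMK ?H1 ?H2.
Qed.
End S4.

Section S5.
Variables (R : realType) (A : CstarAlg R).
Local Notation C := R[i].
Local Notation mA := (@ca_mul R A).
Local Notation sA := (@ca_star R A).
Local Notation U := (uT A).
Local Notation I1 := (1%:M : 'M[uT A]_1).
Hypothesis canc : has_cancellation A.

Definition GM (g : projA A) : 'M[U]_(pdim g) := toM (@pmat _ _ g).
Lemma GM_proj g : projM (GM g).
Proof. exact: (proj1 (proj_toM _) (@pmat_proj _ _ g)). Qed.
Lemma GM_inA g : inAM (GM g).
Proof. exact: (proj1 (inA_toM _) (@pmat_inA _ _ g)). Qed.

Definition pA n (M : 'M[U]_n) (Hn : (0 < n)%N) (iM : inAM M) (pM : projM M) : projA A.
Proof.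
refine (@ProjA R A n (ofM M) Hn _ _).
  by apply/inA_toM; rewrite toMK.
by apply/proj_toM; rewrite toMK.
Defined.

Definition psum (g r : projA A) : projA A.
Proof.
refine (@ProjA R A (pdim g + pdim r) (udiag (@pmat _ _ g) (@pmat _ _ r)) _ _ _).
- by rewrite addn_gt0 pdim_gt0.
- by apply/inA_toM; rewrite toM_udiag; apply: inAM_D; [apply: GM_inA | apply: GM_inA].
- by apply/proj_toM; rewrite toM_udiag; apply: projM_D; [apply: GM_proj | apply: GM_proj].
Defined.

Lemma isproj_E (a : A) : is_proj a <-> projM (E a).
Proof.
split=> [[H1 H2] | [H1 H2]]; first by split; rewrite ?E_mul ?adjM_E ?H1 ?H2.
by split; apply: E_inj; rewrite -?E_mul -?adjM_E.
Qed.
Lemma projle_E (a b : A) : proj_le a b <-> E a *m E b = E a /\ E b *m E a = E a.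
Proof.
split=> [[H1 H2] | [H1 H2]]; first by split; rewrite E_mul ?H1 ?H2.
by split; apply: E_inj; rewrite -E_mul.
Qed.

Definition p1 (a : A) (Ha : is_proj a) : projA A.
Proof.
refine (@ProjA R A 1 (mat1 a) isT _ _).
- by apply/inA_toM; rewrite toM_mat1; apply: inAM_E.
- by apply/proj_toM; rewrite toM_mat1; apply/isproj_E.
Defined.

Lemma canc1 (P Q : 'M[U]_1) : projM P -> projM Q -> inAM P -> inAM Q ->
  mvnM (D P I1) (D Q I1) -> mvnAM P Q.
Proof.
move=> PP PQ iP iQ H.
have := proj1 (canc (@pA 1 P isT iP PP) (@pA 1 Q isT iQ PQ)).
move/(_ _)/mvnA_toM; rewrite /= !toMK; apply.
exists 1%N; apply/mvnu_toM; rewrite !toM_udiag !toMK !toM_uid; exact: H.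
Qed.

Lemma K0le_leM (g h : projA A) : K0le g h -> leM (GM g) (GM h).
Proof.
case=> r Hr; exists (pdim r), (GM r); split; [exact: GM_proj | exact: GM_inA |].
have := proj1 (canc (psum g r) h) Hr; move/mvnA_toM.
by rewrite /= toM_udiag.
Qed.

Lemma K0eqA_mvn (g : projA A) (p : A) (Hp : is_proj p) : K0eqA g p -> mvnAM (GM g) (E p).
Proof.
move=> H; have := proj1 (canc g (p1 Hp)) H; move/mvnA_toM.
by rewrite /= toM_mat1.
Qed.
Lemma mvn_K0eqA (g : projA A) (p : A) (Hp : is_proj p) : mvnAM (GM g) (E p) -> K0eqA g p.
Proof.
move=> H; apply: (proj2 (canc g (p1 Hp))); apply/mvnA_toM.
by rewrite /= toM_mat1.
Qed.
End S5.

Section S6.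
Variables (R : realType) (A : CstarAlg R).
Local Notation mA := (@ca_mul R A).
Local Notation U := (uT A).

Lemma proj_le_trans (a b c : A) : proj_le a b -> proj_le b c -> proj_le a c.
Proof.
move=> [H1 H2] [H3 H4]; split.
  by rewrite -H1 -ca_mulA H3.
by rewrite -H2 ca_mulA H4.
Qed.
Lemma proj_le_refl (a : A) : is_proj a -> proj_le a a.
Proof. by case=> H _; split. Qed.
Lemma proj_le_0 (b : A) : proj_le 0 b.
Proof. by split; [apply: mA0r | apply: mAr0]. Qed.
Lemma is_proj0 : is_proj (0 : A).
Proof. by split; [apply: mA0r | apply: sA0]. Qed.

Lemma maxex (P : nat -> bool) N :
  (exists n0, [/\ (1 <= n0 <= N)%N, P n0 & forall n, (n0 < n)%N -> (n <= N)%N -> ~~ P n]) \/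
  (forall n, (1 <= n)%N -> (n <= N)%N -> ~~ P n).
Proof.
elim: N => [|N [[n0 [H1 H2 H3]] | IH]].
- by right=> n H1 H2; move: H1; rewrite leqn0 in H2; rewrite (eqP H2).
- case HP: (P N.+1).
    left; exists N.+1; split => //; first by rewrite ltn0Sn leqnn.
    by move=> n H4 H5; move: (leq_trans H4 H5); rewrite ltnn.
  left; exists n0; split => //.
    by case/andP: H1 => -> /= ?; apply: leqW.
  move=> n H4; rewrite leq_eqVlt => /orP [/eqP -> | ]; first by rewrite HP.
  by rewrite ltnS; apply: H3.
- case HP: (P N.+1).
    left; exists N.+1; split => //; first by rewrite ltn0Sn leqnn.
    by move=> n H4 H5; move: (leq_trans H4 H5); rewrite ltnn.
  right=> n H1; rewrite leq_eqVlt => /orP [/eqP -> | ]; first by rewrite HP.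
  by rewrite ltnS; apply: IH.
Qed.

Lemma part2 (canc : has_cancellation A) (N M : nat) (p : nat -> A) (g : nat -> projA A) (m : nat -> nat) :
  (1 <= N)%N ->
  (forall n, (1 <= n <= N)%N -> is_proj (p n)) ->
  (forall n, (1 <= n)%N -> (n < N)%N -> proj_le (p n) (p n.+1)) ->
  (forall k, (1 <= k)%N -> (k < M)%N -> K0le (g k) (g k.+1)) ->
  (forall n, (1 <= n <= N)%N -> (1 <= m n <= M)%N) ->
  (forall n, (1 <= n)%N -> (n < N)%N -> (m n < m n.+1)%N) ->
  (forall n, (1 <= n <= N)%N -> K0eqA (g (m n)) (p n)) ->
  m N = M ->
  exists q : nat -> A,
    (forall k, (1 <= k <= M)%N -> is_proj (q k)) /\
    (forall k, (1 <= k)%N -> (k < M)%N -> proj_le (q k) (q k.+1)) /\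
    (forall k, (1 <= k <= M)%N -> K0eqA (g k) (q k)) /\
    (forall n, (1 <= n <= N)%N -> p n = q (m n)).
Proof.
move=> HN Hp Hple Hg Hm Hmi Heq HmN.
pose G k := GM (g k).
have pchain : forall n n', (1 <= n)%N -> (n <= n')%N -> (n' <= N)%N -> proj_le (p n) (p n').
  move=> n n' h1; elim: n' => [|n' IH] h2 h3.
    by move: (leq_trans h1 h2).
  move: h2; rewrite leq_eqVlt => /orP [/eqP -> | h2].
    by apply: proj_le_refl; apply: Hp; rewrite h3 andbT.
  apply: (proj_le_trans (IH h2 (ltnW h3))); apply: Hple => //.
  exact: (leq_trans h1 h2).
have mmono : forall n n', (1 <= n)%N -> (n < n')%N -> (n' <= N)%N -> (m n < m n')%N.
  move=> n n' h1; elim: n' => [|n' IH] //= h2 h3.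
  move: h2; rewrite ltnS leq_eqVlt => /orP [/eqP Hn | h2].
    by rewrite Hn in h1 *; apply: Hmi.
  apply: (ltn_trans (IH h2 (ltnW h3))); apply: Hmi => //.
  exact: (leq_trans h1 (ltnW h2)).
have mle : forall n n', (1 <= n <= N)%N -> (1 <= n' <= N)%N -> (m n <= m n')%N -> (n <= n')%N.
  move=> n n' /andP [h1 h2] /andP [h3 h4] h5; rewrite leqNgt; apply/negP => h6.
  by move: (leq_trans (mmono _ _ h3 h6 h2) h5); rewrite ltnn.
have minj : forall n n', (1 <= n <= N)%N -> (1 <= n' <= N)%N -> m n = m n' -> n = n'.
  move=> n n' h1 h2 h3; apply/eqP; rewrite eqn_leq.
  by rewrite (mle _ _ h1 h2) ?h3 // (mle _ _ h2 h1) ?h3.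
have Gchain : forall i j, (1 <= i)%N -> (i < j)%N -> (j <= M)%N -> leM (G i) (G j).
  move=> i j h1; elim: j => [|j IH] //= h2 h3.
  have Hj : leM (G j) (G j.+1).
    by apply: K0le_leM => //; apply: Hg => //; exact: (leq_trans h1 h2).
  move: h2; rewrite ltnS leq_eqVlt => /orP [/eqP -> | h2] //.
  apply: (leM_trans _ _ _ _ _ (IH h2 (ltnW h3)) Hj); by [apply: GM_proj | apply: GM_inA].
pose Inv j (q : nat -> A) :=
  [/\ forall k, (j <= k)%N -> (k <= M)%N -> is_proj (q k),
      forall k, (j <= k)%N -> (k < M)%N -> proj_le (q k) (q k.+1),
      forall k, (j <= k)%N -> (k <= M)%N -> mvnAM (G k) (E (q k)),
      forall n, (1 <= n <= N)%N -> (j <= m n)%N -> p n = q (m n) &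
      forall n, (1 <= n <= N)%N -> (m n <= j)%N -> proj_le (p n) (q j)].
have HM : (1 <= M)%N by rewrite -HmN; case/andP: (Hm N (introT andP (conj HN (leqnn N)))).
have HNN : (1 <= N <= N)%N by rewrite HN leqnn.
have Pp : forall n, (1 <= n <= N)%N -> projM (E (p n)) by move=> n hn; apply/isproj_E; apply: Hp.
have base : Inv M (fun _ => p N).
  split.
  - by move=> k h1 h2; apply: Hp.
  - by move=> k h1 h2; move: (leq_ltn_trans h1 h2); rewrite ltnn.
  - move=> k h1 h2; have -> : k = M by apply/eqP; rewrite eqn_leq h1 h2.
    by rewrite -HmN; apply: (K0eqA_mvn canc (Hp _ HNN)); apply: Heq.
  - move=> n hn h; have e : m n = m N.
      by rewrite HmN; apply/eqP; rewrite eqn_leq h andbT; case/andP: (Hm n hn).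
    by rewrite (minj _ _ hn HNN e).
  - by move=> n /andP [h1 h2] _; apply: pchain.
have step : forall j q, (1 <= j)%N -> (j < M)%N -> Inv j.+1 q -> exists q', Inv j q'.
  move=> j q hj hjM [I1 I2 I3 I4 I5].
  have hjM' : (j <= M)%N := ltnW hjM.
  case: (maxex (fun n => m n == j) N) => [[n0 [hn0 /eqP e0 _]] | hno].
    exists (fun k => if k == j then p n0 else q k); split.
    - move=> k h1 h2; case: eqP => [_|hk]; first by apply: Hp.
      apply: I1 => //; rewrite ltn_neqAle h1 andbT eq_sym; apply/eqP => E1; exact: hk.
    - move=> k h1 h2; have -> : (k.+1 == j) = false.
        by apply/negbTE; rewrite neq_ltn ltnS h1 orbT.
      case: eqP => [-> | hk].
        by apply: I5 => //; rewrite e0 leqnSn.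
      apply: I2 => //; rewrite ltn_neqAle h1 andbT eq_sym; apply/eqP => E1; exact: hk.
    - move=> k h1 h2; case: eqP => [-> | hk].
        by rewrite -e0; apply: (K0eqA_mvn canc (Hp _ hn0)); apply: Heq.
      apply: I3 => //; rewrite ltn_neqAle h1 andbT eq_sym; apply/eqP => E1; exact: hk.
    - move=> n hn h; case: eqP => [e1 | hk].
        by rewrite (minj _ _ hn hn0 (etrans e1 (esym e0))).
      apply: I4 => //; rewrite ltn_neqAle h andbT eq_sym; apply/eqP => E1; exact: hk.
    - move=> n hn h; rewrite eqxx; apply: pchain.
      + by case/andP: hn.
      + by apply: mle => //; rewrite e0.
      + by case/andP: hn0.
  have gen : forall a : A, is_proj a -> proj_le a (q j.+1) -> leM (E a) (G j) ->
      (forall n, (1 <= n <= N)%N -> (m n < j)%N -> proj_le (p n) a) -> exists q', Inv j q'.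
    move=> a Pa ab aG Hpa.
    have Pb : is_proj (q j.+1) by apply: I1.
    have bG : leM (G j) (E (q j.+1)).
      apply: (leM_eqr (GM_proj (g j)) (proj1 (isproj_E _) Pb) _ (I3 j.+1 (leqnn _) hjM)) => //.
      by apply: (K0le_leM canc); apply: Hg.
    have [hab hba] := proj1 (projle_E _ _) ab.
    have [c [Pc [ac [ca [cb [bc Hc]]]]]] :=
      core (canc1 canc) (proj1 (isproj_E _) Pa) (proj1 (isproj_E _) Pb) hab hba (GM_proj _) (@GM_inA _ _ _) aG bG.
    exists (fun k => if k == j then c else q k); split.
    - move=> k h1 h2; case: eqP => [_|hk]; first by apply/isproj_E.
      apply: I1 => //; rewrite ltn_neqAle h1 andbT eq_sym; apply/eqP => E1; exact: hk.
    - move=> k h1 h2; have -> : (k.+1 == j) = false.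
        by apply/negbTE; rewrite neq_ltn ltnS h1 orbT.
      case: eqP => [-> | hk]; first by apply/projle_E.
      apply: I2 => //; rewrite ltn_neqAle h1 andbT eq_sym; apply/eqP => E1; exact: hk.
    - move=> k h1 h2; case: eqP => [-> | hk] //.
      apply: I3 => //; rewrite ltn_neqAle h1 andbT eq_sym; apply/eqP => E1; exact: hk.
    - move=> n hn h; have hk := hno n (proj1 (andP hn)) (proj2 (andP hn)).
      rewrite (negbTE hk); apply: I4 => //; rewrite ltn_neqAle h andbT eq_sym; exact: hk.
    - move=> n hn h; rewrite eqxx; have hk := hno n (proj1 (andP hn)) (proj2 (andP hn)).
      apply: (proj_le_trans (Hpa n hn _)); first by rewrite ltn_neqAle hk h.
      by apply/projle_E.
  case: (maxex (fun n => m n < j)%N N) => [[n1 [hn1 hlt hmax]] | hnone].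
    apply: (gen (p n1) (Hp _ hn1)).
    - by apply: I5 => //; apply: leqW; apply: ltnW.
    - apply: (leM_eql (Pp _ hn1) (GM_proj _) (mvnAM_sym (K0eqA_mvn canc (Hp _ hn1) (Heq _ hn1)))).
      apply: Gchain => //; by case/andP: (Hm _ hn1).
    - move=> n hn hn'; apply: pchain.
      + by case/andP: hn.
      + rewrite leqNgt; apply/negP => hh; have := hmax n hh (proj2 (andP hn)).
        by rewrite hn'.
      + by case/andP: hn1.
  apply: (gen 0 is_proj0 (proj_le_0 _)).
  - by rewrite E0; apply: leM_0; [apply: GM_proj | apply: GM_inA].
  - move=> n hn hn'; have := hnone n (proj1 (andP hn)) (proj2 (andP hn)).
    by rewrite hn'.
have all : forall d, (d < M)%N -> exists q, Inv (M - d)%N q.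
  elim=> [|d IH] hd; first by exists (fun _ => p N); rewrite subn0.
  have [q hq] := IH (ltnW hd).
  have e : (M - d = (M - d.+1).+1)%N by rewrite subnSK //; apply: ltnW.
  rewrite e in hq; apply: (step _ _ _ _ hq).
  - by rewrite subn_gt0.
  - by rewrite ltn_subrL HM.
have [q [I1 I2 I3 I4 I5]] : exists q, Inv 1 q.
  have := all M.-1; rewrite prednK // => /(_ (leqnn M)).
  have e1 : (M - M.-1 = 1)%N by rewrite -{1}(prednK HM) subSnn.
  by rewrite e1.
exists q; split; [|split; [|split]].
- by move=> k /andP [h1 h2]; apply: I1.
- by move=> k h1 h2; apply: I2.
- move=> k /andP [h1 h2]; apply: (mvn_K0eqA canc (I1 _ h1 h2)); exact: I3.
- move=> n hn; apply: I4 => //; by case/andP: (Hm n hn).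
Qed.

End S6.

Theorem lemma2p3 (R : realType) (A : CstarAlg R) :
  has_cancellation A ->
  (* (1) *)
  (forall (p : A) (N : nat) (g : nat -> projA A),
      is_proj p -> (1 <= N)%N ->
      (forall n, (1 <= n)%N -> (n < N)%N -> K0le (g n) (g n.+1)) ->
      K0eqA (g N) p ->
      exists pp : nat -> A,
        (forall n, (1 <= n <= N)%N -> is_proj (pp n)) /\
        (forall n, (1 <= n)%N -> (n < N)%N -> proj_le (pp n) (pp n.+1)) /\
        (forall n, (1 <= n <= N)%N -> K0eqA (g n) (pp n)) /\
        pp N = p) /\
  (* (2) *)
  (forall (N M : nat) (p : nat -> A) (g : nat -> projA A) (m : nat -> nat),
      (1 <= N)%N ->
      (forall n, (1 <= n <= N)%N -> is_proj (p n)) ->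
      (forall n, (1 <= n)%N -> (n < N)%N -> proj_le (p n) (p n.+1)) ->
      (forall k, (1 <= k)%N -> (k < M)%N -> K0le (g k) (g k.+1)) ->
      (forall n, (1 <= n <= N)%N -> (1 <= m n <= M)%N) ->
      (forall n, (1 <= n)%N -> (n < N)%N -> (m n < m n.+1)%N) ->
      (forall n, (1 <= n <= N)%N -> K0eqA (g (m n)) (p n)) ->
      m N = M ->
      exists q : nat -> A,
        (forall k, (1 <= k <= M)%N -> is_proj (q k)) /\
        (forall k, (1 <= k)%N -> (k < M)%N -> proj_le (q k) (q k.+1)) /\
        (forall k, (1 <= k <= M)%N -> K0eqA (g k) (q k)) /\
        (forall n, (1 <= n <= N)%N -> p n = q (m n))).
Proof.
move=> canc; split; last exact: (part2 canc).
move=> p N g Hp HN Hg Heq.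
have [q [Q1 [Q2 [Q3 Q4]]]] := @part2 R A canc 1 N (fun _ => p) g (fun _ => N) isT
  (fun n _ => Hp) ltac:(by move=> n h1 h2; move: (leq_trans h1 h2))
  Hg (fun n _ => introT andP (conj HN (leqnn N)))
  ltac:(by move=> n h1 h2; move: (leq_trans h1 h2))
  (fun n _ => Heq) erefl.
exists q; split => //; split => //; split => //.
by rewrite (Q4 1%N isT).
Qed.
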